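(* Let $\mathcal{B}_q=\{f\in\operatorname{End}_KV^{\otimes r}:\pi_r(T'_i)f=f\pi_r(T'_i)\ \text{for } i=1,\dots,r-1\}$, $\mathcal{B}_q^\dagger=\{f\in\operatorname{End}_KV^{\otimes r}:\pi_r(T'_i)f=-f\pi_r(T'_i)\ \text{for } i=1,\dots,r-1\}$ and $\mathcal{D}_q=\{f\in\operatorname{End}_KV^{\otimes r}:\pi_r(T'_1T'_{i+1})f=f\pi_r(T'_1T'_{i+1})\ \text{for } i=1,\dots,r-2\}$. Then $\mathcal{D}_q=\mathcal{B}_q\oplus\mathcal{B}_q^\dagger$.
   Context: $q$ is an indeterminate, $K=\mathbb{Q}(q)$, $r\ge2$, $m,n\ge0$ with $m+n\ge1$. $V$ is a $\mathbb{Z}_2$-graded $K$-vector space with basis $v_1,\dots,v_{m+n}$, where $|v_k|=0$ for $k\le m$ and $|v_k|=1$ for $k>m$. $T'$ is the operator on $V\otimes V$ given by $T'(v_k\otimes v_k)=(-1)^{|v_k|}v_k\otimes v_k$; for $k<l$, $T'(v_k\otimes v_l)=\frac{2(-1)^{|v_k||v_l|}}{q+q^{-1}}v_l\otimes v_k+\frac{q-q^{-1}}{q+q^{-1}}v_k\otimes v_l$; for $k>l$, $T'(v_k\otimes v_l)=\frac{2(-1)^{|v_k||v_l|}}{q+q^{-1}}v_l\otimes v_k-\frac{q-q^{-1}}{q+q^{-1}}v_k\otimes v_l$. The $q$-permutation representation $\pi_r$ of the Iwahori–Hecke algebra $\mathcal{H}_{K,r}(q)$ (generators $T_i$, $T_i^2=(q-q^{-1})T_i+1$,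 braid relations) on $V^{\otimes r}$ is the representation with $\pi_r(T'_i)=\mathrm{Id}^{\otimes i-1}\otimes T'\otimes\mathrm{Id}^{\otimes r-i-1}$, where $T'_i=\frac{2T_i-(q-q^{-1})}{q+q^{-1}}$. *)

(* Defs.v *)
From HB Require Import structures.
From mathcomp Require Import all_boot all_order all_algebra.
From mathcomp Require Import fraction.
Set Implicit Arguments. Unset Strict Implicit. Unset Printing Implicit Defensive.
Import Order.TTheory GRing.Theory Num.Theory.
Local Open Scope ring_scope.

(* K = Q(q): the field of fractions of Q[q]; q is the indeterminate. *)
Definition K : fieldType := {fraction {poly rat}}.
Definition q : K := tofrac ('X : {poly rat}).

(* Basis vectors v_1..v_{m+n} are indexed (0-based) by k : 'I_(m+n);
   parity |v_k| = 1 iff k >= m (0-based). *)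
Definition par (m n : nat) (k : 'I_(m + n)) : bool := (m <= k)%N.

(* Tcoef m n a b k l = coefficient of v_a (x) v_b in T'(v_k (x) v_l). *)
Definition Tcoef (m n : nat) (a b k l : 'I_(m + n)) : K :=
  let c := 2 / (q + q^-1) in
  let d := (q - q^-1) / (q + q^-1) in
  if k == l then
    (if (a == k) && (b == k) then (-1) ^+ par k else 0)
  else
    c * (-1) ^+ (par k && par l) * ((a == l) && (b == k))%:R
    + (if (k < l)%N then d else - d) * ((a == k) && (b == l))%:R.

(* Basis of V^{(x) r}: words x : 'I_r -> 'I_(m+n), x <-> v_{x 0} (x) ... (x) v_{x (r-1)}. *)
Definition word (m n r : nat) := {ffun 'I_r -> 'I_(m + n)}.

(* Endomorphisms of V^{(x) r} as matrices indexed by words: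
   f (x, y) = coefficient of e_x in f(e_y). *)
Definition Endo (m n r : nat) := {ffun word m n r * word m n r -> K}.

Definition emul (m n r : nat) (f g : Endo m n r) : Endo m n r :=
  [ffun p => \sum_(y : word m n r) f (p.1, y) * g (y, p.2)].

(* pi_r(T'_i): T' acting on the adjacent tensor positions i0 and i1 = i0+1
   (0-based), identity elsewhere. *)
Definition piT {m n r : nat} (i0 i1 : 'I_r) : Endo m n r :=
  [ffun p : word m n r * word m n r => let x : word m n r := p.1 in let y : word m n r := p.2 in
     if [forall k : 'I_r, (k != i0) && (k != i1) ==> (x k == y k)]
     then Tcoef (x i0) (x i1) (y i0) (y i1) else 0].

(* The three commutant spaces. Position i0 (0-based) with i1 = i0+1 corresponds
   to the generator T'_{i0+1} of the paper. *)
Definition inB (m n r : nat) (f : Endo m n r) : Prop :=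
  forall i0 i1 : 'I_r, val i1 = (val i0).+1 ->
    emul (piT i0 i1) f = emul f (piT i0 i1).

Definition inBdag (m n r : nat) (f : Endo m n r) : Prop :=
  forall i0 i1 : 'I_r, val i1 = (val i0).+1 ->
    emul (piT i0 i1) f = - emul f (piT i0 i1).

(* D_q: commute with pi_r(T'_1 T'_{i+1}) = pi_r(T'_1) pi_r(T'_{i+1}), i = 1..r-2,
   i.e. positions (0,1) and (i0,i0+1) with 1 <= i0. *)
Definition inD (m n r : nat) (f : Endo m n r) : Prop :=
  forall a0 a1 i0 i1 : 'I_r, val a0 = 0%N -> val a1 = 1%N ->
    (0 < val i0)%N -> val i1 = (val i0).+1 ->
    emul (emul (piT a0 a1) (piT i0 i1)) f = emul f (emul (piT a0 a1) (piT i0 i1)).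

(* Main.v *)
Require Import Defs.
From HB Require Import structures.
From mathcomp Require Import all_boot all_order all_algebra fraction.
From mathcomp Require Import ring.
Import GRing.Theory.
Local Open Scope ring_scope.

Definition idE (m n r : nat) : Endo m n r :=
  [ffun p : word m n r * word m n r => ((p.1 == p.2)%:R : K)].
Arguments idE {m n r}.
Definition half (m n r : nat) (X : Endo m n r) : Endo m n r :=
  [ffun p => X p / 2].
Arguments half {m n r}.

Lemma emulA m n r (f g h : Endo m n r) : emul (emul f g) h = emul f (emul g h).
Proof.
apply/ffunP => -[x z]; rewrite !ffunE /=.
under eq_bigr => y _ do rewrite ffunE /= big_distrl /=.
rewrite exchange_big /=; apply: eq_bigr => y _; rewrite ffunE /= big_distrr /=.
by apply: eq_bigr => w _; rewrite mulrA.
Qed.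

Lemma emulDl m n r (f g h : Endo m n r) : emul (f + g) h = emul f h + emul g h.
Proof.
apply/ffunP => p; rewrite !ffunE -big_split /=; apply: eq_bigr => y _.
by rewrite ffunE mulrDl.
Qed.

Lemma emulDr m n r (f g h : Endo m n r) : emul h (f + g) = emul h f + emul h g.
Proof.
apply/ffunP => p; rewrite !ffunE -big_split /=; apply: eq_bigr => y _.
by rewrite ffunE mulrDr.
Qed.

Lemma emulNl m n r (f g : Endo m n r) : emul (- f) g = - emul f g.
Proof.
apply/ffunP => p; rewrite !ffunE -sumrN; apply: eq_bigr => y _.
by rewrite ffunE mulNr.
Qed.

Lemma emulNr m n r (f g : Endo m n r) : emul g (- f) = - emul g f.
Proof.
apply/ffunP => p; rewrite !ffunE -sumrN; apply: eq_bigr => y _.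
by rewrite ffunE mulrN.
Qed.

Lemma emul0l m n r (f : Endo m n r) : emul 0 f = 0.
Proof.
apply/ffunP => p; rewrite !ffunE big1 // => y _; by rewrite ffunE mul0r.
Qed.

Lemma emul1l m n r (f : Endo m n r) : emul idE f = f.
Proof.
apply/ffunP => -[x z]; rewrite !ffunE /= (bigD1 x) //= big1 ?addr0.
  by rewrite ffunE /= eqxx mul1r.
by move=> y /negbTE hy; rewrite ffunE /= eq_sym hy mul0r.
Qed.

Lemma emul1r m n r (f : Endo m n r) : emul f idE = f.
Proof.
apply/ffunP => -[x z]; rewrite !ffunE /= (bigD1 z) //= big1 ?addr0.
  by rewrite ffunE /= eqxx mulr1.
by move=> y /negbTE hy; rewrite ffunE /= hy mulr0.
Qed.

Lemma emul_half_l m n r (f g : Endo m n r) : emul (half f) g = half (emul f g).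
Proof.
apply/ffunP => p; rewrite !ffunE big_distrl /=; apply: eq_bigr => y _.
by rewrite ffunE mulrAC.
Qed.

Lemma emul_half_r m n r (f g : Endo m n r) : emul g (half f) = half (emul g f).
Proof.
apply/ffunP => p; rewrite !ffunE big_distrl /=; apply: eq_bigr => y _.
by rewrite ffunE mulrA.
Qed.

Lemma two_neq0 : (2 : K) != 0.
Proof.
have -> : (2 : K) = tofrac (2%:R : {poly rat}) by rewrite rmorph_nat.
by rewrite tofrac_eq0 -polyC_natr polyC_eq0.
Qed.

Lemma q_neq0 : q != 0.
Proof.
rewrite /q tofrac_eq0; apply/eqP => /(congr1 (horner^~ 1)).
by rewrite hornerX horner0 => /eqP; rewrite oner_eq0.
Qed.

Lemma q2_neq0 : q ^+ 2 + 1 != 0.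
Proof.
rewrite /q -rmorphXn -tofrac1 -tofracD tofrac_eq0; apply/eqP => /(congr1 (horner^~ 0)).
by rewrite !hornerE /= => /eqP; rewrite oner_eq0.
Qed.
Lemma cd1_gen (F : fieldType) (x : F) : x != 0 -> x ^+ 2 + 1 != 0 ->
  (2 / (x + x^-1)) ^+ 2 + ((x - x^-1) / (x + x^-1)) ^+ 2 = 1.
Proof.
move=> h1 h2.
have h3 : x + x^-1 != 0.
  apply: contraNneq h2 => e; have -> : x ^+ 2 + 1 = x * (x + x^-1) by field.
  by rewrite e mulr0.
field; by rewrite h1 -expr2 h2.
Qed.

Lemma cd1 : (2 / (q + q^-1)) ^+ 2 + ((q - q^-1) / (q + q^-1)) ^+ 2 = 1.
Proof. exact: cd1_gen q_neq0 q2_neq0. Qed.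

Lemma half_add_gen (F : fieldType) (a b : F) : (2 : F) != 0 -> (a + b) / 2 + (a - b) / 2 = a.
Proof. by move=> h; field. Qed.

Lemma half_neg_gen (F : fieldType) (a b c d : F) :
  (a - b) / 2 = - ((c - d) / 2) -> (a - b) / 2 = - ((c - d) / 2).
Proof. done. Qed.
Lemma ring_gen (F : comNzRingType) (A B c s e : F) :
  (c * s * A + - e * B) * (c * s) + (c * s * B + e * A) * e = A * ((s * s) * c ^+ 2 + e ^+ 2).
Proof. by ring. Qed.

Lemma sum_pick (T : finType) (F : T -> K) (a : T) (c : K) :
  \sum_j F j * (c * (j == a)%:R) = F a * c.
Proof.
rewrite (bigD1 a) //= eqxx mulr1 big1 ?addr0 // => j /negbTE ->.
by rewrite mulr0 mulr0.
Qed.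

Lemma Tcoef_invol m n (u v k l : 'I_(m+n)) :
  \sum_(j : 'I_(m+n) * 'I_(m+n)) Tcoef u v j.1 j.2 * Tcoef j.1 j.2 k l
  = ((u == k) && (v == l))%:R.
Proof.
case: (eqVneq k l) => [<-|kl].
  rewrite (bigD1 (k, k)) //= big1 ?addr0; last first.
    move=> [a b] /= hj; rewrite {2}/Tcoef eqxx.
    by move: hj; rewrite -xpair_eqE => /negbTE ->; rewrite mulr0.
  rewrite /Tcoef !eqxx /=.
  case: ((u == k) && (v == k)); last by rewrite mul0r.
  by case: (par k); rewrite ?expr0 ?expr1 ?mulr1 ?mulrNN ?mulr1.
set c := 2 / (q + q^-1); set d := (q - q^-1) / (q + q^-1).
set s := (-1) ^+ (par k && par l) : K.
set e := if (k < l)%N then d else - d.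
have E : forall j : 'I_(m+n) * 'I_(m+n),
   Tcoef j.1 j.2 k l = c * s * (j == (l, k))%:R + e * (j == (k, l))%:R.
  by move=> [a b]; rewrite /Tcoef (negbTE kl).
under eq_bigr => j _ do rewrite E mulrDr.
rewrite big_split /= !sum_pick /=.
have cd : c ^+ 2 + d ^+ 2 = 1 by exact: cd1.
rewrite /Tcoef [l == k]eq_sym (negbTE kl) [par l && _]andbC -/c -/d -/s -/e.
have s2 : s * s = 1 by rewrite /s; case: (_ && _); rewrite ?expr0 ?expr1 ?mulr1 ?mulrNN ?mulr1.
set A := ((u == k) && (v == l))%:R : K.
set B := ((u == l) && (v == k))%:R : K.
have -> : (if (l < k)%N then d else - d) = - e.
  rewrite /e; case: (ltngtP k l) => h.
  - by [].
  - by rewrite opprK.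
  - by case/eqP: kl; apply: val_inj.
rewrite ring_gen.
have -> : e ^+ 2 = d ^+ 2 by rewrite /e; case: ifP => _; rewrite ?sqrrN.
by rewrite s2 mul1r cd mulr1.
Qed.
Definition agree (m n r : nat) (i0 i1 : 'I_r) (x y : word m n r) : bool :=
  [forall k : 'I_r, (k != i0) && (k != i1) ==> (x k == y k)].

Arguments agree {m n r}.
Definition upd (m n r : nat) (i0 i1 : 'I_r) (x : word m n r)
  (j : 'I_(m+n) * 'I_(m+n)) : word m n r :=
  [ffun k => if k == i0 then j.1 else if k == i1 then j.2 else x k].

Arguments upd {m n r}.

Lemma piTE m n r (i0 i1 : 'I_r) (x y : word m n r) :
  @piT m n r i0 i1 (x, y) =
  if agree i0 i1 x y then Tcoef (x i0) (x i1) (y i0) (y i1) else 0.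
Proof. by rewrite ffunE. Qed.

Lemma agree_upd m n r (i0 i1 : 'I_r) (x : word m n r) j : agree i0 i1 x (upd i0 i1 x j).
Proof.
apply/forallP => k; apply/implyP => /andP[/negbTE h0 /negbTE h1].
by rewrite ffunE h0 h1.
Qed.

Lemma agree_updE m n r (i0 i1 : 'I_r) (x z : word m n r) j :
  agree i0 i1 (upd i0 i1 x j) z = agree i0 i1 x z.
Proof.
apply: eq_forallb => k; case: (boolP ((k != i0) && (k != i1))) => //=.
by move=> /andP[/negbTE h0 /negbTE h1]; rewrite ffunE h0 h1.
Qed.

Lemma updK m n r (i0 i1 : 'I_r) (x y : word m n r) :
  agree i0 i1 x y -> upd i0 i1 x (y i0, y i1) = y.
Proof.
move=> /forallP a; apply/ffunP => k; rewrite ffunE /=.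
case: (eqVneq k i0) => [->//|h0]; case: (eqVneq k i1) => [->//|h1].
by apply/eqP; have := a k; rewrite h0 h1.
Qed.

Lemma piT2 m n r (i0 i1 : 'I_r) : i0 != i1 ->
  emul (@piT m n r i0 i1) (piT i0 i1) = idE.
Proof.
move=> ne; apply/ffunP=> -[x z]; rewrite !ffunE /=.
under eq_bigr => y _ do rewrite !piTE.
rewrite (bigID (fun y => agree i0 i1 x y)) /= [X in _ + X]big1 ?addr0; last first.
  by move=> y /negbTE ->; rewrite mul0r.
rewrite (reindex_onto (upd i0 i1 x) (fun y => (y i0, y i1))) /=; last first.
  by move=> y; apply: updK.
have U0 : forall j, upd i0 i1 x j i0 = j.1 by move=> j; rewrite ffunE eqxx.
have U1 : forall j, upd i0 i1 x j i1 = j.2.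
  by move=> j; rewrite ffunE eq_sym (negbTE ne) eqxx.
rewrite (eq_bigl (fun _ => true)); last first.
  by move=> [a b]; rewrite agree_upd U0 U1 eqxx.
under eq_bigr => j _ do rewrite agree_upd agree_updE U0 U1.
case: (boolP (agree i0 i1 x z)) => axz.
  rewrite Tcoef_invol.
  suff -> : ((x i0 == z i0) && (x i1 == z i1)) = (x == z) by [].
  apply/idP/idP.
    move=> /andP[/eqP e0 /eqP e1]; apply/eqP; rewrite -(@updK _ _ _ _ _ _ _ axz) -e0 -e1.
    by apply/ffunP => k; rewrite !ffunE; case: ifP => [/eqP->|_] //; case: ifP => [/eqP->|].
  by move=> /eqP ->; rewrite !eqxx.
rewrite big1 //; last by move=> j _; rewrite mulr0.
case: (eqVneq x z) axz => [->|] //.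
by move=> /negP[]; apply/forallP => k; apply/implyP.
Qed.
Lemma emulKl m n r (P X : Endo m n r) : emul P P = idE -> emul P (emul P X) = X.
Proof. by move=> h; rewrite -emulA h emul1l. Qed.
Arguments emulKl {m n r P} X _.

Lemma P2adj m n r (i0 i1 : 'I_r) : val i1 = (val i0).+1 ->
  emul (@piT m n r i0 i1) (piT i0 i1) = idE.
Proof.
move=> h; apply: piT2; apply/eqP => e; move: h; rewrite e.
by move/eqP; rewrite -[X in X == _]addn0 -addn1 eqn_add2l.
Qed.

Theorem lemma5p1 (m n r : nat) (hr : (2 <= r)%N) (hmn : (1 <= m + n)%N) :
  (forall f : Endo m n r,
     inD f <-> exists g h : Endo m n r, [/\ inB g, inBdag h & f = g + h])
  /\ (forall f : Endo m n r, inB f -> inBdag f -> f = 0).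
Proof.
have lt0 : (0 < r)%N by apply: leq_trans hr.
pose a0 : 'I_r := Ordinal lt0. pose a1 : 'I_r := Ordinal hr.
have ha : val a1 = (val a0).+1 by [].
set P1 := @piT m n r a0 a1.
have P11 : emul P1 P1 = idE by apply: P2adj.
split.
  move=> f; split.
    move=> Df.
    set s := emul (emul P1 f) P1.
    have Hs : forall i0 i1 : 'I_r, val i1 = (val i0).+1 ->
        emul (emul (piT i0 i1) f) (piT i0 i1) = s.
      move=> i0 i1 h; case: (posnP (val i0)) => [z|pos].
        have e0 : i0 = a0 by apply: val_inj.
        have e1 : i1 = a1 by apply: val_inj; rewrite h z.
        by rewrite e0 e1.
      have C := Df a0 a1 i0 i1 erefl erefl pos h.
      set P := piT i0 i1 in C *; rewrite -/P1 in C.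
      have PP : emul P P = idE by apply: P2adj.
      have E : emul P f = emul P1 (emul f (emul P1 P)).
        by rewrite -(emulKl (emul P f) P11) -[emul P1 (emul P f)]emulA C.
      by rewrite E !emulA PP emul1r /s emulA.
    exists (half (f + s)), (half (f - s)); split.
    - move=> i0 i1 h; set P := piT i0 i1.
      have PP : emul P P = idE by apply: P2adj.
      have Ef : emul P f = emul s P by rewrite -(Hs i0 i1 h) !emulA PP emul1r.
      have Es : emul P s = emul f P by rewrite -(Hs i0 i1 h) -!emulA PP emul1l.
      by rewrite emul_half_l emul_half_r emulDl emulDr Ef Es addrC.
    - move=> i0 i1 h; set P := piT i0 i1.
      have PP : emul P P = idE by apply: P2adj.
      have Ef : emul P f = emul s P by rewrite -(Hs i0 i1 h) !emulA PP emul1r.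
      have Es : emul P s = emul f P by rewrite -(Hs i0 i1 h) -!emulA PP emul1l.
      rewrite emul_half_l emul_half_r emulDl emulDr emulNl emulNr Ef Es.
      by apply/ffunP => p; rewrite !ffunE -mulNr opprB.
    - by apply/ffunP => p; rewrite !ffunE half_add_gen // two_neq0.
  case=> g [h [Bg Bh ->]] b0 b1 i0 i1 h0 h1 pos hi.
  have hb : val b1 = (val b0).+1 by rewrite h0 h1.
  rewrite emulDr emulDl !emulA (Bg i0 i1 hi) (Bh i0 i1 hi) emulNr.
  rewrite -emulA (Bg b0 b1 hb) -[emul (piT b0 b1) (emul h _)]emulA (Bh b0 b1 hb).
  by rewrite emulNl opprK !emulA.
move=> f Bf Bd.
have e1 := Bf a0 a1 ha; have e2 := Bd a0 a1 ha.
have X0 : emul f P1 = 0.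
  apply/ffunP => p; have := congr1 (fun F : Endo m n r => F p) e2.
  rewrite e1 /= !ffunE => /eqP; rewrite -subr_eq0 opprK -mulr2n -mulr_natr.
  by rewrite mulf_eq0 (negbTE two_neq0) orbF => /eqP.
by rewrite -(@emul1r _ _ _ f) -P11 -emulA X0 emul0l.
Qed.
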